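(* Inner Nonlinear Markov Rewards (INMR), Inner Multi-Objective RL (IMORL) and Functions from Trajectories to Reals (FTR) are equally expressive: $\mathrm{INMR}\sim_{\mathrm{EXPR}}\mathrm{IMORL}\sim_{\mathrm{EXPR}}\mathrm{FTR}$. That is, for every environment $E$, $\mathrm{Ord}_{\mathrm{INMR}}(E)=\mathrm{Ord}_{\mathrm{IMORL}}(E)=\mathrm{Ord}_{\mathrm{FTR}}(E)$.
   Context: An environment is a tuple $E=(\mathcal S,\mathcal A,\mathcal T,\mathcal I)$ where $\mathcal S,\mathcal A$ are finite nonempty sets, $\mathcal T:\mathcal S\times\mathcal A\to\Delta(\mathcal S)$ and $\mathcal I\in\Delta(\mathcal S)$. A policy is a map $\pi:\mathcal S\to\Delta(\mathcal A)$ (stationary, possibly stochastic); $\Pi^E$ denotes the set of all policies. A trajectory is an infinite sequence $\xi=(s_0,a_0,s_1,a_1,\dots)\in\Xi:=\mathcal S\times(\mathcal A\times\mathcal S)^\omega$; under a policy $\pi$ it is generated by $s_0\sim\mathcal I$, $a_t\sim\pi(s_t)$, $s_{t+1}\sim\mathcal T(s_t,a_t)$, and $\mathbb E^\pi_\xi$, $\mathbb P^\pi$ denote expectation and probability under this distribution. An objective-specification formalism $X$ assigns to each environment $E$ a set of objective specifications, each of which induces a total preorder (transitive and strongly connected relation) $\succeq$ on $\Pi^E$; $\mathrm{Ord}_X(E)$ is the set of total preorders so induced. When a specification defines a scalar $J:\Pi^E\to\mathbb R$, it induces $\pi_1\succeq\pi_2\iff J(\pi_1)\ge J(\pi_2)$.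 We write $X\succeq_{\mathrm{EXPR}}Y$ iff $\mathrm{Ord}_Y(E)\subseteq\mathrm{Ord}_X(E)$ for every environment $E$, and $X\sim_{\mathrm{EXPR}}Y$ iff $X\succeq_{\mathrm{EXPR}}Y$ and $Y\succeq_{\mathrm{EXPR}}X$. For functions of trajectories below, functions are assumed Borel measurable (with the product topology on $\Xi$) and a specification is admissible only if all expectations appearing in its $J$ are well-defined and finite for every policy. INMR: a specification is $(\mathcal R,f,\gamma)$ with $\mathcal R:\mathcal S\times\mathcal A\times\mathcal S\to\mathbb R$, $f:\mathbb R\to\mathbb R$, $\gamma\in[0,1)$, and $J(\pi)=\mathbb E^\pi_\xi\big[f\big(\sum_{t=0}^\infty\gamma^t\mathcal R(s_t,a_t,s_{t+1})\big)\big]$. IMORL: a specification is $(k,\mathcal R,f,\gamma)$ with $k\in\mathbb N$, $\mathcal R:\mathcal S\times\mathcal A\times\mathcal S\to\mathbb R^k$ with components $\mathcal R_i$, $f:\mathbb R^k\to\mathbb R$, $\gamma\in[0,1)$, and $J(\pi)=\mathbb E^\pi_\xi[f(G_1(\xi),\dots,G_k(\xi))]$ where $G_i(\xi)=\sum_{t=0}^\infty\gamma^t\mathcal R_i(s_t,a_t,s_{t+1})$. FTR: a specification is $(f)$ with $f:\Xi\to\mathbb R$ and $J(\pi)=\mathbb E^\pi_\xi[f(\xi)]$. *)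

(* Defs.v *)
From HB Require Import structures.
From mathcomp Require Import all_boot all_order all_algebra.
From mathcomp Require Import all_classical all_reals all_analysis.
Import Order.TTheory GRing.Theory Num.Theory.
Import numFieldNormedType.Exports.

Set Implicit Arguments.
Unset Strict Implicit.
Unset Printing Implicit Defensive.

Local Open Scope classical_set_scope.
Local Open Scope ring_scope.

Record dist (R : realType) (T : finType) := Dist {
  pmf :> T -> R ;
  pmf_ge0 : forall x, 0 <= pmf x ;
  pmf_sum1 : \sum_(x : T) pmf x = 1 }.

(** The points s0, a0 only serve to equip the (nonempty) trajectory space with
    the pointedType structure required by the library; they play no other role. *)
Definition traj (S A : finType) (s0 : S) (a0 : A) := nat -> S * A.
Arguments traj {S A}.
HB.instance Definition _ (S A : finType) (s0 : S) (a0 : A) :=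
  Choice.on (traj s0 a0).
HB.instance Definition _ (S A : finType) (s0 : S) (a0 : A) :=
  isPointed.Build (traj s0 a0) (fun _ => (s0, a0)).

Section Traj.
Variables (S A : finType) (s0 : S) (a0 : A).
Local Notation traj := (traj s0 a0).

(** The product topology on trajectories (each factor finite, discrete):
    U is open iff membership is determined by some finite prefix. *)
Definition traj_open : set (set traj) :=
  [set U | forall xi, U xi -> exists n : nat,
     forall xi', (forall t, (t < n)%N -> xi' t = xi t) -> U xi'].

End Traj.

Notation Xi s0 a0 := (g_sigma_algebraType (@traj_open _ _ s0 a0)).

Section Specs.
Variables (R : realType) (S A : finType) (s0 : S) (a0 : A).
Variables (T : S -> A -> dist R S) (I : dist R S).

Definition policy := S -> dist R A.
Local Notation Xi := (Xi s0 a0).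

Definition st (xi : Xi) (t : nat) : S := (xi t).1.
Definition ac (xi : Xi) (t : nat) : A := (xi t).2.

Definition prefix_prob (pi : policy) (n : nat) (c : nat -> S * A) : R :=
  I (c 0%N).1 * pi (c 0%N).1 (c 0%N).2 *
  \prod_(t < n) (T (c t).1 (c t).2 (c t.+1).1 * pi (c t.+1).1 (c t.+1).2).

(** P is the law of the trajectory generated by pi:
    s_0 ~ I, a_t ~ pi(s_t), s_{t+1} ~ T(s_t,a_t). *)
Definition traj_law (pi : policy) (P : probability Xi R) : Prop :=
  forall (n : nat) (c : nat -> S * A),
    P [set xi : Xi | forall t, (t <= n)%N -> xi t = c t] = (prefix_prob pi n c)%:E.

Definition admissible (h : Xi -> R) : Prop :=
  forall pi P, traj_law pi P -> P.-integrable setT (EFin \o h).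

Definition induced (h : Xi -> R) : policy -> policy -> Prop :=
  fun pi1 pi2 => forall P1 P2, traj_law pi1 P1 -> traj_law pi2 P2 ->
    (\int[P1]_xi (h xi)%:E >= \int[P2]_xi (h xi)%:E)%E.

Definition disc_return (r : S -> A -> S -> R) (g : R) (xi : Xi) : R :=
  limn (fun n => \sum_(t < n) g ^+ t * r (st xi t) (ac xi t) (st xi t.+1)).

Definition Ord_INMR : set (policy -> policy -> Prop) :=
  [set rel | exists (r : S -> A -> S -> R) (f : R -> R) (g : R),
      [/\ 0 <= g < 1, measurable_fun setT f,
          admissible (f \o disc_return r g)
        & rel = induced (f \o disc_return r g)]].

Notation Rk k := (g_sigma_algebraType (@open 'rV[R]_k)).

Definition Ord_IMORL : set (policy -> policy -> Prop) :=
  [set rel | exists (k : nat) (r : S -> A -> S -> 'rV[R]_k) (f : Rk k -> R) (g : R),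
      let G := fun xi : Xi => (\row_(i < k) disc_return (fun s a s' => r s a s' 0 i) g xi
                                : Rk k) in
      [/\ 0 <= g < 1, measurable_fun setT f,
          admissible (f \o G)
        & rel = induced (f \o G)]].

Definition Ord_FTR : set (policy -> policy -> Prop) :=
  [set rel | exists h : Xi -> R,
      [/\ measurable_fun setT h, admissible h & rel = induced h]].

End Specs.

(* Main.v *)
Require Import Defs.
From HB Require Import structures.
From mathcomp Require Import all_boot all_order all_algebra.
From mathcomp Require Import all_classical all_reals all_analysis.
Import Order.TTheory GRing.Theory Num.Theory.
Import numFieldNormedType.Exports.
From mathcomp Require Import lra zify.
From Stdlib Require Import Lia.

Set Implicit Arguments.
Unset Strict Implicit.
Unset Printing Implicit Defensive.
Local Open Scope classical_set_scope.
Local Open Scope ring_scope.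
Section Series.
Variables (R : realType) (S A : finType) (s0 : S) (a0 : A).
Local Notation Xi := (Xi s0 a0).

Definition psum (r : S -> A -> S -> R) (g : R) (xi : Xi) (n : nat) : R :=
  \sum_(t < n) g ^+ t * r (st xi t) (ac xi t) (st xi t.+1).

Definition shift (xi : Xi) : Xi := fun t => xi t.+1.

Lemma psumS r g xi n : psum r g xi n.+1 =
  r (st xi 0) (ac xi 0) (st xi 1) + g * psum r g (shift xi) n.
Proof.
rewrite /psum big_ord_recl expr0 mul1r mulr_sumr; congr (_ + _).
by apply: eq_bigr => i _; rewrite exprS mulrA.
Qed.

Lemma psum_bound r g C K : 0 <= g -> 0 <= K ->
  (forall s a s', `|r s a s'| <= C) -> C + g * K <= K ->
  forall n xi, `|psum r g xi n| <= K.
Proof.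
move=> g0 K0 rC CK; elim=> [|n IH] xi; first by rewrite /psum big_ord0 normr0.
rewrite psumS (le_trans (ler_normD _ _))// (le_trans _ CK)// lerD// normrM.
by rewrite ger0_norm// ler_wpM2l.
Qed.

Lemma psum_ge0 r g xi n : 0 <= g -> (forall s a s', 0 <= r s a s') ->
  0 <= psum r g xi n.
Proof. by move=> g0 r0; apply: sumr_ge0 => t _; rewrite mulr_ge0// exprn_ge0. Qed.

Lemma psum_nd r g xi : 0 <= g -> (forall s a s', 0 <= r s a s') ->
  nondecreasing_seq (psum r g xi).
Proof.
move=> g0 r0; apply/nondecreasing_seqP => n.
by rewrite /psum big_ord_recr /= lerDl mulr_ge0// exprn_ge0.
Qed.

Lemma le_sum_term (I : finType) (F : I -> R) i : (forall j, 0 <= F j) ->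
  F i <= \sum_j F j.
Proof. by move=> F0; rewrite (bigD1 i)//= lerDl sumr_ge0. Qed.

Definition rbound (r : S -> A -> S -> R) : R :=
  \sum_(x : S * A * S) `|r x.1.1 x.1.2 x.2|.

Lemma rboundP r s a s' : `|r s a s'| <= rbound r.
Proof. exact: (@le_sum_term _ (fun x : S * A * S => `|r x.1.1 x.1.2 x.2|) (s, a, s')). Qed.

Lemma rbound_ge0 r : 0 <= rbound r.
Proof. exact: le_trans (rboundP r s0 a0 s0). Qed.

Lemma psum_cvg r g xi : 0 <= g < 1 -> cvgn (psum r g xi).
Proof.
case/andP=> g0 g1; set M := rbound r.
have M0 : 0 <= M := rbound_ge0 r.
pose r' := fun s a s' => r s a s' + M.
pose rM := fun (s : S) (a : A) (s' : S) => M.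
have r'0 s a s' : 0 <= r' s a s'.
  have := rboundP r s a s'; rewrite ler_norml /r' => /andP[h _].
  rewrite /M; lra.
have rM0 s a s' : 0 <= rM s a s' by [].
have -> : psum r g xi = psum r' g xi - psum rM g xi.
  apply/funext => n /=; rewrite /psum fctE -sumrB; apply: eq_bigr => t _.
  by rewrite /r' /rM mulrDr addrK.
have Kb (r0 : S -> A -> S -> R) C : (forall s a s', 0 <= r0 s a s' <= C) ->
    has_ubound (range (psum r0 g xi)).
  move=> rC; have C0 : 0 <= C by case/andP: (rC s0 a0 s0) => h1 h2; apply: le_trans h1 h2.
  have h1 : 0 < 1 - g by rewrite subr_gt0.
  exists (C / (1 - g)) => _ [n _ <-].
  apply: le_trans (ler_norm _) _; apply: (psum_bound (C := C)) => //.
  - by rewrite divr_ge0// ltW.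
  - by move=> s a s'; case/andP: (rC s a s') => h2 h3; rewrite ger0_norm.
  - set K := C / (1 - g); have hK : C = K * (1 - g) by rewrite /K mulfVK ?gt_eqF.
    by rewrite {1}hK mulrBr mulr1 [g * K]mulrC subrK.
apply: is_cvgB; apply: nondecreasing_is_cvgn; try exact: psum_nd.
- apply: (Kb _ (M + M)) => s a s'; rewrite r'0 /= /r' lerD2r.
  exact: le_trans (ler_norm _) (rboundP _ _ _ _).
- by apply: (Kb _ M) => s a s'; rewrite rM0 /rM lexx.
Qed.

End Series.
Section DiscReturn.
Variables (R : realType) (S A : finType) (s0 : S) (a0 : A).
Local Notation Xi := (Xi s0 a0).
Implicit Types (r : S -> A -> S -> R) (g : R) (xi : Xi).

Lemma disc_psum r g xi : disc_return r g xi = limn (psum r g xi).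
Proof. by []. Qed.

Lemma D_rec r g xi : 0 <= g < 1 -> disc_return r g xi =
  r (st xi 0) (ac xi 0) (st xi 1) + g * disc_return r g (shift xi).
Proof.
move=> hg; rewrite !disc_psum; apply: cvg_lim => //.
rewrite -cvg_shiftS.
have -> : [sequence psum r g xi n.+1]_n =
   (fun n => r (st xi 0) (ac xi 0) (st xi 1) + g * psum r g (shift xi) n).
  by apply/funext => n /=; exact: psumS.
apply: cvgD; first exact: cvg_cst.
apply: cvgMl_tmp; exact: psum_cvg.
Qed.

Lemma D_bound r g C K xi : 0 <= g < 1 -> 0 <= K ->
  (forall s a s', `|r s a s'| <= C) -> C + g * K <= K ->
  `|disc_return r g xi| <= K.
Proof.
move=> hg K0 rC CK; have g0 : 0 <= g by case/andP: hg.
rewrite disc_psum ler_norml; apply/andP; split.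
- apply: limr_ge; first exact: psum_cvg.
  by apply: nearW => n; have := psum_bound g0 K0 rC CK n xi; rewrite ler_norml => /andP[].
- apply: limr_le; first exact: psum_cvg.
  by apply: nearW => n; have := psum_bound g0 K0 rC CK n xi; rewrite ler_norml => /andP[].
Qed.

Lemma D_ge0 r g xi : 0 <= g < 1 -> (forall s a s', 0 <= r s a s') ->
  0 <= disc_return r g xi.
Proof.
move=> hg r0; have g0 : 0 <= g by case/andP: hg.
rewrite disc_psum; apply: limr_ge; first exact: psum_cvg.
by apply: nearW => n; exact: psum_ge0.
Qed.

Lemma D_close r g C K n : 0 <= g < 1 -> 0 <= K ->
  (forall s a s', `|r s a s'| <= C) -> C + g * K <= K ->
  forall xi xi', (forall t, (t < n.+1)%N -> xi' t = xi t) ->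
  `|disc_return r g xi - disc_return r g xi'| <= g ^+ n * (K + K).
Proof.
move=> hg K0 rC CK; have g0 : 0 <= g by case/andP: hg.
elim: n => [|n IH] xi xi' H.
  rewrite expr0 mul1r (le_trans (ler_normB _ _))// lerD//; exact: D_bound.
rewrite (D_rec _ xi hg) (D_rec _ xi' hg).
have e0 := H 0%N isT; have e1 := H 1%N isT.
rewrite /st /ac e0 e1 opprD addrACA subrr add0r -mulrBr normrM ger0_norm//.
rewrite exprS -mulrA ler_wpM2l// IH// => t tn.
exact: H.
Qed.

End DiscReturn.
Lemma sum_le_nat (n m : nat) : (\sum_(1 <= k < n) (k <= m)%N = minn m n.-1)%N.
Proof.
elim: n => [|n IH]; first by rewrite big_geq // minn0.
case: n IH => [|n] IH; first by rewrite big_geq // minn0.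
rewrite big_nat_recr //= IH /=.
by case: (leqP n.+1 m) => h /=; lia.
Qed.

Section Encoding.
Variables (R : realType) (S A : finType) (s0 : S) (a0 : A).
Local Notation Xi := (Xi s0 a0).
Local Notation N := #|{: S * A}|.

Definition w (c : S * A) : R := (enum_rank c : nat)%:R.
Definition renc (s : S) (a : A) (s' : S) : R := w (s, a).
Definition bas : R := N.+1%:R.
Definition genc : R := bas^-1.
Definition dig (x : R) : R := \sum_(1 <= k < N) \1_(`[k%:R, +oo[%classic) x.
Definition phi (x : R) : R := bas * (x - dig x).
Definition dec (x : R) : Xi :=
  fun t => odflt (s0, a0) [pick c | w c == dig (iter t phi x)].

Lemma N_gt0 : (0 < N)%N.
Proof. exact: leq_ltn_trans (leq0n _) (ltn_ord (enum_rank (s0, a0))). Qed.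

Lemma w_inj : injective w.
Proof. by move=> c c' /eqP; rewrite /w eqr_nat => /eqP/ord_inj/enum_rank_inj. Qed.

Lemma w_bound c : 0 <= w c <= (N.-1)%:R.
Proof.
rewrite /w ler0n ler_nat /= -ltnS prednK ?N_gt0 //; exact: ltn_ord.
Qed.

Lemma bas_gt0 : 0 < bas. Proof. by rewrite /bas ltr0n. Qed.

Lemma genc_bounds : 0 <= genc < 1.
Proof.
rewrite /genc invr_ge0 ltW ?bas_gt0 //= invf_lt1 ?bas_gt0 // /bas ltr1n ltnS.
exact: N_gt0.
Qed.

Lemma gN_lt1 : genc * N%:R < 1.
Proof.
by rewrite /genc mulrC ltr_pdivrMr ?bas_gt0 // mul1r /bas ltr_nat.
Qed.

Lemma CK_enc : (N.-1)%:R + genc * N%:R <= N%:R :> R.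
Proof.
apply: le_trans (lerD (lexx _) (ltW gN_lt1)) _.
by rewrite natr1 prednK // N_gt0.
Qed.

Lemma renc_bound s a s' : `|renc s a s'| <= (N.-1)%:R.
Proof. by case/andP: (w_bound (s, a)) => h1 h2; rewrite /renc ger0_norm. Qed.

Lemma renc_ge0 s a s' : 0 <= renc s a s'.
Proof. by case/andP: (w_bound (s, a)). Qed.

Local Notation D := (@disc_return R S A s0 a0 renc genc).

Lemma D_enc_rec xi : D xi = w (xi 0%N) + genc * D (shift xi).
Proof. by rewrite (D_rec _ _ genc_bounds) /renc /st /ac -surjective_pairing. Qed.

Lemma D_enc_bound xi : 0 <= D xi <= N%:R.
Proof.
apply/andP; split; first by apply: D_ge0; [exact: genc_bounds | exact: renc_ge0].
apply: le_trans (ler_norm _) _; apply: D_bound genc_bounds _ renc_bound CK_enc.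
by rewrite ler0n.
Qed.

Lemma indic_ge (k : nat) (x : R) :
  \1_(`[k%:R, +oo[%classic) x = (nat_of_bool (k%:R <= x))%:R :> R.
Proof.
rewrite indicE; congr ((nat_of_bool _)%:R); apply/idP/idP => [/set_mem|h].
  by rewrite /= in_itv /= andbT.
by apply: mem_set; rewrite /= in_itv /= h.
Qed.

Lemma dig_eval (m : nat) (eps : R) : (m < N)%N -> 0 <= eps < 1 ->
  dig (m%:R + eps) = m%:R.
Proof.
move=> mN /andP[e0 e1]; rewrite /dig.
have -> : \sum_(1 <= k < N) \1_(`[k%:R, +oo[%classic) (m%:R + eps) =
          \sum_(1 <= k < N) ((k <= m)%N : nat)%:R :> R.
  apply: eq_bigr => k _; rewrite indic_ge; congr ((nat_of_bool _)%:R).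
  apply/idP/idP => h.
    rewrite leqNgt; apply/negP => km.
    have : (m.+1)%:R <= (k%:R : R) by rewrite ler_nat.
    rewrite -natr1 => h2; lra.
  have hk : (k%:R <= m%:R :> R) by rewrite ler_nat.
  lra.
by rewrite -natr_sum sum_le_nat; congr (_%:R); lia.
Qed.

Lemma phi_D xi : phi (D xi) = D (shift xi).
Proof.
have [h0 h1] := andP (D_enc_bound (shift xi)).
have [g0 g1] := andP genc_bounds.
have eps0 : 0 <= genc * D (shift xi) by rewrite mulr_ge0.
have eps1 : genc * D (shift xi) < 1.
  by apply: le_lt_trans gN_lt1; rewrite ler_wpM2l.
rewrite /phi D_enc_rec {2}/w dig_eval //; last by rewrite eps0 eps1.
by rewrite addrAC subrr add0r mulrA /genc mulfV ?gt_eqF ?bas_gt0 // mul1r.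
Qed.

Lemma iter_phi t xi : iter t phi (D xi) = D (iter t (@shift S A s0 a0) xi).
Proof. by elim: t => //= t ->; rewrite phi_D. Qed.

Lemma iter_shift0 t xi : (iter t (@shift S A s0 a0) xi) 0%N = xi t.
Proof. by elim: t xi => // t IH xi; rewrite iterSr IH. Qed.

Lemma dig_iter t xi : dig (iter t phi (D xi)) = w (xi t).
Proof.
rewrite iter_phi D_enc_rec iter_shift0 {1}/w dig_eval //.
have [h0 h1] := andP (D_enc_bound (shift (iter t (@shift S A s0 a0) xi))).
have [g0 g1] := andP genc_bounds.
rewrite mulr_ge0 //=; apply: le_lt_trans gN_lt1; exact: ler_wpM2l.
Qed.

Lemma dec_D xi : dec (D xi) = xi.
Proof.
apply/funext => t; rewrite /dec dig_iter.
case: pickP => [c /eqP/w_inj -> //| H].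
by have := H (xi t); rewrite eqxx.
Qed.

End Encoding.
Section EncMeas.
Variables (R : realType) (S A : finType) (s0 : S) (a0 : A).
Local Notation Xi := (Xi s0 a0).
Local Notation w := (@w R S A).
Local Notation decR := (@dec R S A s0 a0).

Lemma mdig : measurable_fun setT (@dig R S A).
Proof.
apply: measurable_sum => k.
by apply: measurable_realfun.measurable_indic; exact: measurable_itv.
Qed.

Lemma mphi : measurable_fun setT (@phi R S A).
Proof.
rewrite (_ : @phi R S A = (cst (@bas R S A)) \* (fun x => x - @dig R S A x)) //.
apply: measurable_realfun.measurable_funM => //.
apply: measurable_realfun.measurable_funB => //; exact: mdig.
Qed.

Lemma miter t : measurable_fun setT (iter t (@phi R S A)).
Proof. elim: t => [|t IH]; first exact: measurable_id.
exact: measurableT_comp mphi IH. Qed.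

Definition Fc (c : S * A) : set R :=
  [set z | odflt (s0, a0) [pick c' | w c' == z] = c].

Lemma mFc c : measurable (Fc c).
Proof.
have -> : Fc c = [set w c] `|`
   ([set _ | c = (s0, a0)] `&` ~` \bigcup_(c' in [set: S * A]) [set w c']).
  apply/seteqP; split => z /=.
    rewrite /Fc /=; case: pickP => [c' /eqP wc|nonec] /= <-; first by left.
    right; split => // -[c'' _ /= zc'']; have := nonec c''.
    by rewrite zc'' eqxx.
  rewrite /Fc /=; case => [-> | [cd nz]].
    case: pickP => [c' /eqP /w_inj -> // | H].
    by have := H c; rewrite eqxx.
  case: pickP => [c' /eqP wc | _ //]; exfalso; apply: nz; exists c' => //.
apply: measurableU; first exact: measurable_set1.
apply: measurableI.
  case: (pselect (c = (s0, a0))) => h.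
    rewrite (_ : [set _ : R | c = (s0, a0)] = setT) //.
    by apply/seteqP; split => // z _.
  rewrite (_ : [set _ : R | c = (s0, a0)] = set0) //.
  by apply/seteqP; split => // z.
apply: measurableC; apply: fin_bigcup_measurable; first exact: finite_finset.
by move=> c' _; exact: measurable_set1.
Qed.

Lemma mdec_set t c : measurable [set x : R | decR x t = c].
Proof.
have := (measurableT_comp mdig (miter t)) measurableT (Fc c) (mFc c).
by rewrite setTI.
Qed.

Lemma mdec : measurable_fun setT (@dec R S A s0 a0 : R -> Xi).
Proof.
apply: (@measurability _ _ R Xi setT (@dec R S A s0 a0) (@traj_open S A s0 a0)) => //.
move=> _ [U oU <-]; rewrite setTI.
have -> : decR @^-1` U = \bigcup_n
   [set x | forall xi' : Xi, (forall t, (t < n)%N -> xi' t = decR x t) -> U xi'].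
  apply/seteqP; split => x /=.
    by move=> Ux; have [n Hn] := oU _ Ux; exists n.
  by case=> n _ H; apply: H.
apply: bigcupT_measurable => n.
have -> : [set x | forall xi' : Xi, (forall t, (t < n)%N -> xi' t = decR x t) -> U xi']
   = \bigcup_(p in [set p : {ffun 'I_n -> S * A} |
         forall xi' : Xi, (forall t : 'I_n, xi' t = p t) -> U xi'])
       \bigcap_(t in [set: 'I_n]) [set x | decR x t = p t].
  apply/seteqP; split => x /=.
    move=> Hx; exists [ffun t : 'I_n => decR x t].
      by move=> xi' H; apply: Hx => t tn; rewrite (H (Ordinal tn)) ffunE.
    by move=> t _ /=; rewrite ffunE.
  case=> p Qp Cp xi' H; apply: Qp => t.
  by rewrite H ?ltn_ord // (Cp t Logic.I).
apply: fin_bigcup_measurable; first exact: finite_finset.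
move=> p _; apply: fin_bigcap_measurable; first exact: finite_finset.
by move=> t _; exact: mdec_set.
Qed.

End EncMeas.
Section Incl.
Variables (R : realType) (S A : finType) (s0 : S) (a0 : A).
Variables (T : S -> A -> dist R S) (I : dist R S).
Local Notation Xi := (Xi s0 a0).

Lemma FTR_INMR : Ord_FTR s0 a0 T I `<=` Ord_INMR s0 a0 T I.
Proof.
move=> rel [h [mh adh ->]].
exists (@renc R S A), (fun x => h (@dec R S A s0 a0 x)), (@genc R S A).
have E : (fun x => h (@dec R S A s0 a0 x)) \o
   @disc_return R S A s0 a0 (@renc R S A) (@genc R S A) = h.
  by apply/funext => xi /=; rewrite dec_D.
rewrite E; split => //; first exact: genc_bounds.
exact: (measurableT_comp mh (@mdec R S A s0 a0)).
Qed.

Lemma mproj : measurable_fun setT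
  (fun v : g_sigma_algebraType (@open 'rV[R]_1) => (v : 'rV[R]_1) 0 0).
Proof.
apply: (@measurability _ _ (g_sigma_algebraType (@open 'rV[R]_1)) R setT _ _
  (measurable_realfun.RGenOpens.measurableE R)).
move=> _ [_ [a [b ->]] <-]; rewrite setTI; apply: sub_sigma_algebra.
move: (@coord_continuous R 1 1 0 0) => /continuousP; apply.
exact: interval_open.
Qed.

Lemma INMR_IMORL : Ord_INMR s0 a0 T I `<=` Ord_IMORL s0 a0 T I.
Proof.
move=> rel [r [f [g [hg mf adm ->]]]].
exists 1%N, (fun s a s' => const_mx (r s a s')),
  (fun v : g_sigma_algebraType (@open 'rV[R]_1) => f ((v : 'rV[R]_1) 0 0)), g.
cbv zeta.
rewrite (_ : _ \o _ = f \o disc_return r g); last first.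
  apply/funext => xi /=; rewrite mxE; congr (f _); congr disc_return.
  by apply/funext => s; apply/funext => a; apply/funext => s'; rewrite mxE.
split => //; exact: (measurableT_comp mf mproj).
Qed.

End Incl.
Section Incl2.
Variables (R : realType) (S A : finType) (s0 : S) (a0 : A).
Variables (T : S -> A -> dist R S) (I : dist R S).
Local Notation Xi := (Xi s0 a0).

Lemma exists_small (g e K : R) : 0 <= g < 1 -> 0 < e -> 0 <= K ->
  exists n, g ^+ n * (K + K) < e.
Proof.
move=> /andP[g0 g1] e0 K0.
have gabs : `|g| < 1 by rewrite ger0_norm.
have pos : 0 < e / (K + K + 1) by rewrite divr_gt0 // ltr_wpDl // addr_ge0.
have /cvgrPdist_lt /(_ _ pos) := cvg_expr gabs.
case=> n0 _ Hn0; exists n0; have := Hn0 n0 (leqnn n0).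
rewrite /= sub0r normrN ger0_norm ?exprn_ge0 // ltr_pdivlMr ?ltr_wpDl ?addr_ge0 // => h.
apply: le_lt_trans h; rewrite ler_wpM2l ?exprn_ge0 //; lra.
Qed.

Lemma mG k (r : S -> A -> S -> 'rV[R]_k) g : 0 <= g < 1 ->
  measurable_fun setT (fun xi : Xi =>
    (\row_(i < k) disc_return (fun s a s' => r s a s' 0 i) g xi
       : g_sigma_algebraType (@open 'rV[R]_k))).
Proof.
move=> hg; have [g0 g1] := andP hg.
apply: (@measurability _ _ Xi (g_sigma_algebraType (@open 'rV[R]_k)) setT _
   (@open 'rV[R]_k)) => //.
move=> _ [U oU <-]; rewrite setTI; apply: sub_sigma_algebra.
move=> xi /= Uxi.
have /nbhs_ballP [e e0 He] := @open_nbhs_nbhs _ _ _ (conj oU Uxi).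
pose C := \sum_(i < k) rbound (fun s a s' => r s a s' 0 i).
have C0 : 0 <= C.
  rewrite /C; apply: sumr_ge0 => i _. exact: (@rbound_ge0 R S A s0 a0 (fun (s : S) (a : A) (s' : S) => r s a s' 0 i)).
have rC i s a s' : `|r s a s' 0 i| <= C.
  apply: le_trans (rboundP (fun s a s' => r s a s' 0 i) s a s') _.
  by apply: (@le_sum_term _ _ (fun i => rbound (fun s a s' => r s a s' 0 i))) => j; exact: (@rbound_ge0 R S A s0 a0 (fun (s : S) (a : A) (s' : S) => r s a s' 0 j)).
have h1 : 0 < 1 - g by rewrite subr_gt0.
set K := C / (1 - g).
have K0 : 0 <= K by rewrite divr_ge0 // ltW.
have CK : C + g * K <= K.
  have hK : C = K * (1 - g) by rewrite /K mulfVK ?gt_eqF.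
  by rewrite {1}hK mulrBr mulr1 [g * K]mulrC subrK.
have [n Hn] := exists_small hg e0 K0.
exists n.+1 => xi' H; apply: He.
split => // i j; rewrite !mxE.
rewrite /ball /=.
apply: le_lt_trans Hn.
exact: (D_close (r := fun s a s' => r s a s' 0 j) hg K0 (rC j) CK H).
Qed.

Lemma IMORL_FTR : Ord_IMORL s0 a0 T I `<=` Ord_FTR s0 a0 T I.
Proof.
move=> rel [k [r [f [g]]]]; cbv zeta => -[hg mf adm ->].
eexists; split; [|exact: adm|reflexivity].
exact: (measurableT_comp mf (mG r hg)).
Qed.

Lemma theorem1' : Ord_INMR s0 a0 T I = Ord_IMORL s0 a0 T I /\
  Ord_IMORL s0 a0 T I = Ord_FTR s0 a0 T I.
Proof.
have h1 := @INMR_IMORL R S A s0 a0 T I; have h2 := IMORL_FTR; have h3 := @FTR_INMR R S A s0 a0 T I.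
split; apply/seteqP; split => //.
- by move=> x /h2 /h3.
- by move=> x /h3 /h1.
Qed.

End Incl2.

Theorem theorem1 (R : realType) (S A : finType) (s0 : S) (a0 : A)
    (T : S -> A -> dist R S) (I : dist R S) :
  Ord_INMR s0 a0 T I = Ord_IMORL s0 a0 T I /\
  Ord_IMORL s0 a0 T I = Ord_FTR s0 a0 T I.
Proof. exact: theorem1'. Qed.
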